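(* Let $\mathcal G$ be an undirected connected graph on the agent set $\mathcal V=\{1,\dots,N\}$ with symmetric nonnegative weights $a_{ij}=a_{ji}$, where $a_{ij}>0$ if and only if $j\in\mathcal N_i$ (the neighbor set of $i$), and let $L$ be its weighted Laplacian ($l_{ij}=-a_{ij}$ for $i\ne j$, $l_{ii}=\sum_{j\ne i}a_{ij}$), with $\lambda_2>0$ its smallest nonzero eigenvalue. Fix a common amplitude $A_{\rm m}>0$ and, for each ordered pair $(i,j)$ with $j\in\mathcal N_i$, a constant frequency $\omega_{ij}$ (chosen at random by agent $i$), and set $s_{ij}(t)=A_{\rm m}\sin(\omega_{ij}t)$. Each agent forms the masking signal $m_i(t)=\sum_{j\in\mathcal N_i}\big(s_{ji}(t)-s_{ij}(t)\big)$ and the masked reference $z_{{\rm m},i}(t)=z_i(t)+m_i(t)$, where $z_i:[0,\infty)\to\mathbb R$ is its continuously differentiable reference signal with bounded derivative $\dot z_i$. For a gain $\beta>0$, each agent runs $$\dot{\hat z}_{{\rm a},i}(t)=\dot z_{{\rm m},i}(t)-\beta\sum_{j=1}^N a_{ij}\big(\hat z_{{\rm a},i}(t)-\hat z_{{\rm a},j}(t)\big),\qquad \hat z_{{\rm a},i}(0)=z_i(0)+m_i(0).$$ Then each estimate $\hat z_{{\rm a},i}(t)$ tracks the true average $\frac1N\mathbf 1_N^{\rm T}z(t)$, where $z(t)=[z_1(t)\,\cdots\,z_N(t)]^{\rm T}$, with a bounded steady-state deviation that decreases as $\beta$ increases; precisely, there is a constant $c\ge 0$ depending on the reference signals, the masking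 signals and the graph but not on $\beta$, such that for every $\beta>0$ and every $i\in\mathcal V$, $$\limsup_{t\to\infty}\Big|\hat z_{{\rm a},i}(t)-\tfrac1N\mathbf 1_N^{\rm T}z(t)\Big|\le \frac{c}{\beta}.$$
   Context: $\mathbf 1_N$ denotes the all-ones vector in $\mathbb R^N$. The signal $s_{ij}$ is generated by agent $i$ and sent to neighbor $j$; hence $m_i$ uses the signals $s_{ji}$ received from neighbors and the signals $s_{ij}$ sent to them. *)

(* Defs.v *)
From HB Require Import structures.
From mathcomp Require Import all_boot all_order all_algebra.
From mathcomp Require Import all_classical all_reals all_analysis.
Set Implicit Arguments. Unset Strict Implicit. Unset Printing Implicit Defensive.
Import Order.TTheory GRing.Theory Num.Theory.
Import numFieldNormedType.Exports.
Local Open Scope classical_set_scope.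
Local Open Scope ring_scope.

(* Weighted undirected graph on agents 'I_N given by weights a i j.
   Neighbour relation: j \in N_i  <->  0 < a i j. *)
Definition weights_ok (R : realType) (N : nat) (a : 'I_N -> 'I_N -> R) : Prop :=
  (forall i j, a i j = a j i) /\ (forall i j, 0 <= a i j).

Definition graph_connected (R : realType) (N : nat) (a : 'I_N -> 'I_N -> R) : Prop :=
  forall i j : 'I_N, connect (fun u v : 'I_N => 0 < a u v) i j.

Definition sig (R : realType) (N : nat) (Am : R) (w : 'I_N -> 'I_N -> R)
  (i j : 'I_N) (t : R) : R := Am * sin (w i j * t).

Definition mask (R : realType) (N : nat) (a : 'I_N -> 'I_N -> R) (Am : R)
  (w : 'I_N -> 'I_N -> R) (i : 'I_N) (t : R) : R :=
  \sum_(j < N | 0 < a i j) (sig Am w j i t - sig Am w i j t).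

Definition ref_signal_ok (R : realType) (f : R -> R) : Prop :=
  {within `[0, +oo[, continuous f} /\
  (forall t : R, 0 < t -> derivable f t 1) /\
  {in `]0, +oo[, continuous (derive1 f)} /\
  (exists M : R, forall t : R, 0 < t -> `|derive1 f t| <= M).

Definition estimator_solution (R : realType) (N : nat) (a : 'I_N -> 'I_N -> R)
  (Am : R) (w : 'I_N -> 'I_N -> R) (z : 'I_N -> R -> R) (beta : R)
  (zh : 'I_N -> R -> R) : Prop :=
  forall i : 'I_N,
    {within `[0, +oo[, continuous (zh i)} /\
    zh i 0 = z i 0 + mask a Am w i 0 /\
    (forall t : R, 0 < t ->
       derivable (zh i) t 1 /\
       derive1 (zh i) t =
         derive1 (fun s => z i s + mask a Am w i s) t
         - beta * \sum_(j < N) a i j * (zh i t - zh j t)).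

(* Main.v *)
Require Import Defs.
From HB Require Import structures.
From mathcomp Require Import all_boot all_order all_algebra.
From mathcomp Require Import all_classical all_reals all_analysis.
From mathcomp Require Import ring lra.
Import Order.TTheory GRing.Theory Num.Theory.
Import numFieldNormedType.Exports.
Local Open Scope classical_set_scope.
Local Open Scope ring_scope.

Set Implicit Arguments. Unset Strict Implicit.
Section H.
Context {R : realType}.

Lemma is_derive_sumf n (h : 'I_n -> R -> R) (t : R) (dh : 'I_n -> R) :
  (forall i, is_derive t 1 (h i) (dh i)) ->
  is_derive t 1 (fun s => \sum_(i < n) h i s) (\sum_(i < n) dh i).
Proof.
move=> H.
have -> : (fun s => \sum_(i < n) h i s) = \sum_(i < n) h i.
  by apply/funext => s; rewrite fct_sumE.
exact: is_derive_sum.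
Qed.

Lemma is_derive_sq (f : R -> R) (t df : R) : is_derive t 1 f df ->
  is_derive t 1 (fun s => f s ^+ 2) (2 * f t * df).
Proof.
move=> H.
have -> : (fun s => f s ^+ 2) = f ^+ 2 by apply/funext => s; rewrite /= expr2.
apply: is_derive_eq.
by rewrite /= expr1 /GRing.scale /= mulrC; congr (_ * _).
Qed.

Lemma within_cont_sum n (A : set R) (h : 'I_n -> R -> R) :
  (forall i, {within A, continuous (h i)}) ->
  {within A, continuous (fun s => \sum_(i < n) h i s)}.
Proof.
move=> H.
have -> : (fun s => \sum_(i < n) h i s) = \sum_(i < n) h i.
  by apply/funext => s; rewrite fct_sumE.
elim/big_ind: _ => //.
- move=> x; exact: (@cst_continuous _ _ (0:R) x).
- move=> f g cf cg x; exact: (continuousD (cf x) (cg x)).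
Qed.

Lemma within_contM (A : set R) (f g : R -> R) :
  {within A, continuous f} -> {within A, continuous g} ->
  {within A, continuous (fun s => f s * g s)}.
Proof. move=> cf cg x; exact: (continuousM (cf x) (cg x)). Qed.

Lemma within_contB (A : set R) (f g : R -> R) :
  {within A, continuous f} -> {within A, continuous g} ->
  {within A, continuous (fun s => f s - g s)}.
Proof. move=> cf cg x; exact: (continuousB (cf x) (cg x)). Qed.

Lemma within_contW (A : set R) (f : R -> R) : continuous f -> {within A, continuous f}.
Proof. move=> cf; exact: continuous_subspaceT. Qed.


Lemma is_derive_lin (k x : R) : is_derive x 1 (fun s => k * s) k.
Proof.
have H := is_deriveZ k (is_derive_id x 1).
exact: (is_derive_eq H (mulr1 k)).
Qed.

Lemma is_derive_expk (k x : R) : is_derive x 1 (fun s => expR (k * s)) (expR (k * x) * k).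
Proof.
have -> : (fun s => expR (k * s)) = expR \o (fun s => k * s) by [].
apply: is_derive1_comp; exact: is_derive_lin.
Qed.

Lemma comparison (f : R -> R) (k b : R) : 0 < k ->
  {within `[0, +oo[, continuous f} ->
  (forall t : R, 0 < t -> derivable f t 1) ->
  (forall t : R, 0 < t -> derive1 f t <= - k * f t + b) ->
  forall t : R, 0 <= t -> f t <= b / k + expR (- (k * t)) * (f 0 - b / k).
Proof.
move=> k0 cf df hf t t0.
pose g := fun s => expR (k * s) * (f s - b / k).
have dg : forall s : R, 0 < s -> is_derive s 1 g
   (expR (k * s) * (k * f s - b + derive1 f s)).
  move=> s s0.
  have := derivableP (df s s0); rewrite -derive1E => Hf.
  have Hfb : is_derive s 1 (fun u => f u - b / k) (derive1 f s).
    exact: (is_derive_eq (is_deriveB Hf (is_derive_cst (b / k) s 1)) (subr0 _)).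
  have H := is_deriveM (is_derive_expk k s) Hfb.
  apply: (is_derive_eq H).
  rewrite /GRing.scale /=.
  have kn : k != 0 by rewrite gt_eqF.
  by field.
have gle : g t <= g 0.
  apply: (@ler0_derive1_nincry _ g 0) => //.
  - move=> x; rewrite in_itv /= andbT => x0.
    by have [] := dg x x0.
  - move=> x; rewrite in_itv /= andbT => x0.
    rewrite derive1E (@derive_val _ _ _ _ _ _ _ (dg x x0)).
    rewrite pmulr_rle0 ?expR_gt0 //.
    have := hf x x0; rewrite mulNr. lra.
  - apply: within_contM; first apply/within_contW => x.
    apply/differentiable_continuous/derivable1_diffP.
    by have [] := is_derive_expk k x.
    apply: within_contB => //. exact/within_contW/cst_continuous.
move: gle; rewrite /g mulr0 expR0 mul1r => gle.
have e0 := expR_gt0 (k * t).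
rewrite expRN -lerBlDl.
rewrite -(ler_pM2l e0) mulrA mulfV ?gt_eqF // mul1r. exact: gle.
Qed.


Definition avg {n} (x : 'I_n -> R) := (\sum_(j < n) x j) / n%:R.

Lemma sum_dev0 n (x : 'I_n -> R) : \sum_(i < n) (x i - avg x) = 0.
Proof.
rewrite sumrB sumr_const card_ord /avg.
case: n x => [|n] x; first by rewrite big_ord0 mulr0n subr0.

by rewrite -[_ *+ n.+1]mulr_natr divfK ?subrr // pnatr_eq0.
Qed.

Lemma pair_dev n (x : 'I_n -> R) :
  \sum_(i < n) \sum_(j < n) (x i - x j) ^+ 2 =
  (\sum_(i < n) (x i - avg x) ^+ 2) *+ (2 * n).
Proof.
pose d i := x i - avg x.
have e : forall i j, (x i - x j) ^+ 2 = d i ^+ 2 + d j ^+ 2 - 2 * d i * d j.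
  by move=> i j; rewrite /d; ring.
have s0 : \sum_(i < n) d i = 0 by exact: sum_dev0.
under eq_bigr => i _ do under eq_bigr => j _ do rewrite e.
under eq_bigr => i _ do rewrite sumrB big_split /= sumr_const card_ord -mulr_sumr s0 mulr0 subr0.
rewrite big_split /= sumr_const card_ord sumrMnl.
by rewrite [(2 * n)%N]mulnC mulrnA mulr2n.
Qed.

Lemma dev_le_pair n (x : 'I_n -> R) :
  \sum_(i < n) (x i - avg x) ^+ 2 <= \sum_(i < n) \sum_(j < n) (x i - x j) ^+ 2.
Proof.
rewrite pair_dev.
have h0 : 0 <= \sum_(i < n) (x i - avg x) ^+ 2 by apply: sumr_ge0 => i _; exact: sqr_ge0.
case: n x h0 => [|n] x h0; first by rewrite big_ord0 mulr0n.
rewrite -mulr_natr ler_peMr // natrM.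
rewrite (_ : 2%:R = 1 + 1) // mulrDl mul1r.
have : 1 <= (n.+1)%:R :> R by rewrite ler1n.
have : 0 <= (n.+1)%:R :> R by [].
lra.
Qed.

Lemma lap_identity n (a : 'I_n -> 'I_n -> R) (x : 'I_n -> R) (m : R) :
  (forall i j, a i j = a j i) ->
  2 * \sum_(i < n) (x i - m) * \sum_(j < n) a i j * (x i - x j) =
  \sum_(i < n) \sum_(j < n) a i j * (x i - x j) ^+ 2.
Proof.
move=> sym.
pose T := \sum_(i < n) \sum_(j < n) a i j * ((x i - m) * (x i - x j)).
pose T' := \sum_(i < n) \sum_(j < n) a i j * ((x j - m) * (x j - x i)).
have ET : \sum_(i < n) (x i - m) * \sum_(j < n) a i j * (x i - x j) = T.
  apply: eq_bigr => i _; rewrite mulr_sumr; apply: eq_bigr => j _; ring.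
have ET' : T = T'.
  rewrite /T /T' exchange_big /=; apply: eq_bigr => i _; apply: eq_bigr => j _.
  by rewrite sym.
rewrite ET mulr2n mulrDl mul1r {2}ET' /T /T' -big_split /=.
apply: eq_bigr => i _; rewrite -big_split /=; apply: eq_bigr => j _; ring.
Qed.


Lemma mask_sum0 n (a : 'I_n -> 'I_n -> R) Am w (t : R) :
  (forall i j, a i j = a j i) -> \sum_(i < n) Defs.mask a Am w i t = 0.
Proof.
move=> sym.
pose F i j := if 0 < a i j then Defs.sig Am w j i t else 0.
have E : forall i, Defs.mask a Am w i t = \sum_(j < n) (F i j - F j i).
  move=> i; rewrite /Defs.mask big_mkcond /=; apply: eq_bigr => j _.
  by rewrite /F (sym j i); case: ifP => _; rewrite ?subrr.
under eq_bigr => i _ do rewrite E sumrB.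
by rewrite sumrB exchange_big /= subrr.
Qed.

Lemma term_le_sum2 n (F : 'I_n -> 'I_n -> R) i j :
  (forall i j, 0 <= F i j) -> F i j <= \sum_(i < n) \sum_(j < n) F i j.
Proof.
move=> F0.
rewrite (bigD1 i) //= (bigD1 j) //= -addrA lerDl.
apply: addr_ge0; first by apply: sumr_ge0 => k _; exact: F0.
by apply: sumr_ge0 => k _; apply: sumr_ge0 => l _; exact: F0.
Qed.

Lemma path_bound n (a : 'I_n -> 'I_n -> R) :
  (forall i j, 0 <= a i j) ->
  forall (p : seq 'I_n) (i : 'I_n), path (fun u v : 'I_n => 0 < a u v) i p ->
  exists C : R, 0 <= C /\ forall x : 'I_n -> R,
    (x i - x (last i p)) ^+ 2 <= C * \sum_(u < n) \sum_(v < n) a u v * (x u - x v) ^+ 2.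
Proof.
move=> a0; elim=> [|y p IH] i /=.
  move=> _; exists 0; split => // x; by rewrite subrr expr0n mul0r.
move=> /andP [aiy py].
have [C' [C'0 HC']] := IH y py.
exists (2 / a i y + 2 * C'); split.
  apply: addr_ge0; last by apply: mulr_ge0.
  by apply: divr_ge0 => //; exact: ltW.
move=> x.
set S := \sum_(u < n) \sum_(v < n) _.
have S1 : a i y * (x i - x y) ^+ 2 <= S.
  apply: (@term_le_sum2 n (fun u v => a u v * (x u - x v) ^+ 2)).
  by move=> u v; apply: mulr_ge0 => //; exact: sqr_ge0.
have S1' : (x i - x y) ^+ 2 <= S / a i y.
  by rewrite ler_pdivlMr // mulrC.
have S2 := HC' x.
set q := x i - x y in S1' *.
set r := x y - x (last y p) in S2 *.
have -> : x i - x (last y p) = q + r by rewrite /q /r; ring.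
have h : (q + r) ^+ 2 <= 2 * q ^+ 2 + 2 * r ^+ 2.
  have := sqr_ge0 (q - r).
  have -> : (q - r) ^+ 2 = 2 * q ^+ 2 + 2 * r ^+ 2 - (q + r) ^+ 2 by ring.
  by rewrite subr_ge0.
apply: (le_trans h).
have -> : (2 / a i y + 2 * C') * S = 2 * (S / a i y) + 2 * (C' * S).
  rewrite mulrDl; congr (_ + _); rewrite ?mulrA //.
  by rewrite mulrC mulrA [S * 2]mulrC.
apply: lerD; rewrite ler_pM2l //.
Qed.

Lemma coercive n (a : 'I_n -> 'I_n -> R) :
  weights_ok a -> graph_connected a ->
  exists C : R, 0 < C /\ forall x : 'I_n -> R,
    \sum_(i < n) (x i - avg x) ^+ 2 <=
    C * \sum_(i < n) \sum_(j < n) a i j * (x i - x j) ^+ 2.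
Proof.
move=> [sym a0] conn.
have pr : forall ij : 'I_n * 'I_n, exists C : R, 0 <= C /\ forall x : 'I_n -> R,
    (x ij.1 - x ij.2) ^+ 2 <= C * \sum_(u < n) \sum_(v < n) a u v * (x u - x v) ^+ 2.
  move=> [i j] /=.
  have /connectP [p pp ->] := conn i j.
  exact: path_bound.
have [Cf HCf] := choice pr.
exists (1 + \sum_(i < n) \sum_(j < n) Cf (i, j)); split.
  apply: (lt_le_trans ltr01); rewrite lerDl; apply: sumr_ge0 => i _; apply: sumr_ge0 => j _.
  by have [] := HCf (i, j).
move=> x.
set S := \sum_(u < n) \sum_(v < n) a u v * (x u - x v) ^+ 2.
have S0 : 0 <= S.
  by apply: sumr_ge0 => i _; apply: sumr_ge0 => j _; apply: mulr_ge0 => //; exact: sqr_ge0.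

apply: (le_trans (@dev_le_pair n x)).
rewrite mulrDl mul1r.
apply: (@le_trans _ _ (\sum_(i < n) \sum_(j < n) Cf (i, j) * S)).
  apply: ler_sum => i _; apply: ler_sum => j _.
  by have [_ ] := HCf (i, j); move/(_ x).
have -> : \sum_(i < n) \sum_(j < n) Cf (i, j) * S = (\sum_(i < n) \sum_(j < n) Cf (i, j)) * S.
  rewrite mulr_suml; apply: eq_bigr => i _; by rewrite mulr_suml.
by rewrite lerDr.
Qed.


Lemma sig_deriv n Am (w : 'I_n -> 'I_n -> R) i j (t : R) :
  is_derive t 1 (fun s => Defs.sig Am w i j s) (Am * (cos (w i j * t) * w i j)).
Proof.
have H1 := is_derive1_comp (is_derive_sin (w i j * t)) (is_derive_lin (w i j) t).
have H2 := is_deriveZ Am H1.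
exact: (is_derive_eq H2 erefl).
Qed.

Definition maskd n (a : 'I_n -> 'I_n -> R) Am (w : 'I_n -> 'I_n -> R) i (t : R) :=
  \sum_(j < n) (if 0 < a i j then Am * (cos (w j i * t) * w j i) - Am * (cos (w i j * t) * w i j) else 0).

Lemma mask_deriv n (a : 'I_n -> 'I_n -> R) Am w i (t : R) :
  is_derive t 1 (fun s => Defs.mask a Am w i s) (maskd a Am w i t).
Proof.
have -> : (fun s => Defs.mask a Am w i s) = (fun s => \sum_(j < n)
   (fun j s => if 0 < a i j then Defs.sig Am w j i s - Defs.sig Am w i j s else 0) j s).
  by apply/funext => s; rewrite /Defs.mask big_mkcond.
apply: is_derive_sumf => j.
case: ifP => _.
  exact: (is_deriveB (sig_deriv Am w j i t) (sig_deriv Am w i j t)).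
exact: (is_derive_cst (0:R) t 1).
Qed.

Lemma maskd_bound n (a : 'I_n -> 'I_n -> R) Am w i (t : R) :
  `|maskd a Am w i t| <= \sum_(j < n) (`|Am| * `|w j i| + `|Am| * `|w i j|).
Proof.
rewrite /maskd; apply: (le_trans (ler_norm_sum _ _ _)); apply: ler_sum => j _.
have cb : forall u : R, `|Am * (cos (u * t) * u)| <= `|Am| * `|u|.
  move=> u; rewrite !normrM; apply: ler_wpM2l => //.
  rewrite -[X in _ <= X]mul1r; apply: ler_wpM2r => //.
  by rewrite ler_norml cos_le1 cos_geN1.
case: ifP => _; last first.
  by rewrite normr0; apply: addr_ge0; apply: mulr_ge0.
apply: (le_trans (ler_normB _ _)); apply: lerD; exact: cb.
Qed.


Lemma limsup_from_bound (f : R -> R) (y : R) :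
  (forall e, 0 < e -> exists T : R, forall t, T < t -> `|f t| <= y + e) ->
  (limf_esup (fun t : R => (`|f t|)%:E) (+oo%R : set_system R) <= y%:E)%E.
Proof.
move=> H; apply/lee_addgt0Pr => e e0.
have [T HT] := H e e0.
rewrite limf_esupE.
apply: (@le_trans _ _ (ereal_sup ((fun t : R => (`|f t|)%:E) @` [set t | T < t]))).
  apply: ereal_inf_lbound; exists [set t | T < t] => //.
  by exists T; split => //; exact: num_real.
apply: ge_ereal_sup => _ [t /= Tt <-].
by rewrite -EFinD lee_fin; exact: HT.
Qed.

Lemma exp_bound_eventually (k D e : R) : 0 < k -> 0 < e ->
  exists T : R, 0 <= T /\ forall t, T < t -> expR (- (k * t)) * D <= e.
Proof.
move=> k0 e0.
exists (`|D| / (k * e)); split.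
  by apply: divr_ge0 => //; apply: mulr_ge0; exact: ltW.
move=> t Tt.
have t0 : 0 < t.
  apply: le_lt_trans Tt; apply: divr_ge0 => //; apply: mulr_ge0; exact: ltW.
have ke : 0 < k * e by exact: mulr_gt0.
have e1 : 0 < expR (k * t) := expR_gt0 _.
rewrite expRN.
apply: (@le_trans _ _ ((expR (k * t))^-1 * `|D|)).
  by apply: ler_wpM2l; [rewrite invr_ge0 ltW | exact: ler_norm].
rewrite mulrC ler_pdivrMr //.
have h1 := expR_ge1Dx (k * t).
have : `|D| < k * e * t by move: Tt; rewrite ltr_pdivrMr // mulrC.
have : 0 <= `|D| by [].
move: h1; rewrite (mulrC k e) -mulrA.
move: (k * t) => s.
nra.
Qed.


Lemma young (kap d u : R) : 0 < kap -> 2 * d * u <= kap * d ^+ 2 + u ^+ 2 / kap.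
Proof.
move=> k0.
have h := sqr_ge0 (kap * d - u).
have e : kap * d ^+ 2 + u ^+ 2 / kap - 2 * d * u = (kap * d - u) ^+ 2 / kap.
  by field; rewrite gt_eqF.
rewrite -subr_ge0 e; apply: divr_ge0 => //; exact: ltW.
Qed.

Lemma const_of_deriv0 (f : R -> R) :
  {within `[0, +oo[, continuous f} ->
  (forall t : R, 0 < t -> is_derive t 1 f 0) ->
  forall t : R, 0 <= t -> f t = f 0.
Proof.
move=> cf df t t0.
have d1 : forall x, x \in `]0, +oo[%R -> derivable f x 1.
  by move=> x; rewrite in_itv /= andbT => x0; have [] := df x x0.
have d2 : forall x, x \in `]0, +oo[%R -> derive1 f x <= 0.
  by move=> x; rewrite in_itv /= andbT => x0; rewrite derive1E (@derive_val _ _ _ _ _ _ _ (df x x0)).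
have h1 := @ler0_derive1_nincry R f 0 d1 d2 cf 0 t (lexx 0) t0.
have dN : forall x : R, 0 < x -> is_derive x 1 (fun s => - f s) 0.
  move=> x x0; exact: (is_derive_eq (is_deriveN (df x x0)) (oppr0 _)).
have d1' : forall x, x \in `]0, +oo[%R -> derivable (fun s => - f s) x 1.
  by move=> x; rewrite in_itv /= andbT => x0; have [] := dN x x0.
have d2' : forall x, x \in `]0, +oo[%R -> derive1 (fun s => - f s) x <= 0.
  by move=> x; rewrite in_itv /= andbT => x0; rewrite derive1E (@derive_val _ _ _ _ _ _ _ (dN x x0)).
have cf' : {within `[0, +oo[, continuous (fun s => - f s)}.
  move=> x; exact: (continuousN (cf x)).
have h2 := @ler0_derive1_nincry R _ 0 d1' d2' cf' 0 t (lexx 0) t0.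
by apply/eqP; rewrite eq_le h1 -lerN2 h2.
Qed.

Lemma lap_sum0 n (a : 'I_n -> 'I_n -> R) (x : 'I_n -> R) :
  (forall i j, a i j = a j i) ->
  \sum_(i < n) \sum_(j < n) a i j * (x i - x j) = 0.
Proof.
move=> sym.
set T := \sum_(i < n) _.
have ET : T = - T.
  rewrite {1}/T exchange_big /= /T -sumrN; apply: eq_bigr => i _.
  rewrite -sumrN; apply: eq_bigr => j _; rewrite sym; ring.
have : T *+ 2 = 0 by rewrite mulr2n {1}ET addNr.
by move/eqP; rewrite mulrn_eq0 /= => /eqP.
Qed.

Lemma is_derive_mulc (f : R -> R) (t df c : R) :
  is_derive t 1 f df -> is_derive t 1 (fun s => f s * c) (df * c).
Proof.
move=> H.
have H2 := is_deriveM H (is_derive_cst c t 1).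
apply: (is_derive_eq H2).
by rewrite /GRing.scale /= mulr0 add0r mulrC.
Qed.

Lemma sq_le_of_abs (u K : R) : `|u| <= K -> u ^+ 2 <= K ^+ 2.
Proof.
move=> h; rewrite -real_normK ?num_real //.
by rewrite ler_pXn2r // ?nnegrE (le_trans _ h).
Qed.

Lemma abs_le_of_sq (d y : R) : 0 <= y -> d ^+ 2 <= y ^+ 2 -> `|d| <= y.
Proof.
move=> y0 h; rewrite -(@ler_pXn2r _ 2) // ?nnegrE //.
by rewrite real_normK // num_real.
Qed.


Lemma within_contD (A : set R) (f g : R -> R) :
  {within A, continuous f} -> {within A, continuous g} ->
  {within A, continuous (fun s => f s + g s)}.
Proof. move=> cf cg x; exact: (continuousD (cf x) (cg x)). Qed.

Lemma term_le_sum n (F : 'I_n -> R) i :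
  (forall i, 0 <= F i) -> F i <= \sum_(i < n) F i.
Proof.
move=> F0; rewrite (bigD1 i) //= lerDl.
by apply: sumr_ge0 => k _; exact: F0.
Qed.

End H.


Unset Implicit Arguments.
Theorem theorem1 (R : realType) (N : nat) (a : 'I_N -> 'I_N -> R)
  (Am : R) (w : 'I_N -> 'I_N -> R) (z : 'I_N -> R -> R) :
  weights_ok a -> graph_connected a -> 0 < Am ->
  (forall i, ref_signal_ok (z i)) ->
  exists c : R, 0 <= c /\
    forall (beta : R) (zh : 'I_N -> R -> R), 0 < beta ->
      estimator_solution a Am w z beta zh ->
      forall i : 'I_N,
        (limf_esup (fun t : R => (`|zh i t - (\sum_(j < N) z j t) / N%:R|)%:E)
           (+oo%R : set_system R) <= (c / beta)%:E)%E.
Proof.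
move=> wok conn Am0 zok.
have [sym a0] := wok.
have [C [C0 HC]] := coercive wok conn.
have /choice [M HM] : forall i, exists Mi : R, forall t : R, 0 < t -> `|derive1 (z i) t| <= Mi.
  by move=> i; have [_ [_ [_ ]]] := zok i.
pose K i := `|M i| + \sum_(j < N) (`|Am| * `|w j i| + `|Am| * `|w i j|).
pose Q := \sum_(i < N) K i ^+ 2.
have Q0 : 0 <= Q by apply: sumr_ge0 => j _; exact: sqr_ge0.
exists (2 * C * Num.sqrt Q); split.
  by apply: mulr_ge0; [apply: mulr_ge0 => //; exact: ltW | exact: sqrtr_ge0].
move=> beta zh b0 est i.
pose u j t := derive1 (fun s => z j s + Defs.mask a Am w j s) t.
have du : forall j (t : R), 0 < t ->
    is_derive t 1 (fun s => z j s + Defs.mask a Am w j s) (u j t) /\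
    u j t = derive1 (z j) t + maskd a Am w j t.
  move=> j t t0.
  have [_ [dz _]] := zok j.
  have H := is_deriveD (derivableP (dz t t0)) (mask_deriv a Am w j t).
  have E := @derive_val _ _ _ _ _ _ _ H.
  have E' : u j t = derive1 (z j) t + maskd a Am w j t.
    by rewrite /u !derive1E; exact: E.
  split => //; rewrite E'; apply: (is_derive_eq H); by rewrite derive1E.
have ub : forall j (t : R), 0 < t -> `|u j t| <= K j.
  move=> j t t0; have [_ ->] := du j t t0.
  apply: (le_trans (ler_normD _ _)); apply: lerD.
    exact: (le_trans (HM j t t0) (ler_norm _)).
  exact: maskd_bound.
pose L j t := \sum_(k < N) a j k * (zh j t - zh k t).
have dd : forall j (t : R), 0 < t -> is_derive t 1 (zh j) (derive1 (zh j) t) /\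
    derive1 (zh j) t = u j t - beta * L j t.
  move=> j t t0; have [_ [_ /(_ t t0) [dz ->]]] := est j.
  split => //; rewrite -/(u j t).
  have := derivableP dz; rewrite -derive1E; move=> H.
  by have [_ [_ /(_ t t0) [_ <-]]] := est j.
have czh : forall j, {within `[0, +oo[, continuous (zh j)} by move=> j; have [] := est j.
have cmask : forall j, {within `[0, +oo[, continuous (fun s => z j s + Defs.mask a Am w j s)}.
  move=> j; apply: within_contD; first by have [] := zok j.
  apply: within_contW => x.
  apply/differentiable_continuous/derivable1_diffP.
  by have [] := mask_deriv a Am w j x.
pose P s := \sum_(j < N) zh j s - \sum_(j < N) (z j s + Defs.mask a Am w j s).
have cons : forall t : R, 0 <= t -> \sum_(j < N) zh j t = \sum_(j < N) z j t.
  move=> t t0.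
  have cP : {within `[0, +oo[, continuous P}.
    by apply: within_contB; apply: within_cont_sum.
  have dP : forall s : R, 0 < s -> is_derive s 1 P 0.
    move=> s s0.
    have H := is_deriveB (is_derive_sumf (fun j => (dd j s s0).1))
                         (is_derive_sumf (fun j => (du j s s0).1)).
    apply: (is_derive_eq H).
    under eq_bigr => j _ do rewrite (dd j s s0).2.
    rewrite sumrB -mulr_sumr lap_sum0 // mulr0 subr0 subrr //.
  have := const_of_deriv0 cP dP t0.
  have -> : P 0 = 0.
    rewrite /P; apply/eqP; rewrite subr_eq0; apply/eqP; apply: eq_bigr => j _.
    by have [_ [-> _]] := est j.
  rewrite /P => /eqP; rewrite subr_eq0 => /eqP ->.
  by rewrite big_split /= mask_sum0 // addr0.
pose V s := \sum_(j < N) (zh j s - (\sum_(k < N) zh k s) / N%:R) ^+ 2.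
pose Dv t := \sum_(j < N) 2 * (zh j t - (\sum_(k < N) zh k t) / N%:R) *
               (derive1 (zh j) t - (\sum_(k < N) derive1 (zh k) t) / N%:R).
have cV : {within `[0, +oo[, continuous V}.
  apply: within_cont_sum => j.
  have cj : {within `[0, +oo[, continuous (fun s => zh j s - (\sum_(k < N) zh k s) / N%:R)}.
    apply: within_contB => //; apply: within_contM; first exact: within_cont_sum.
    exact/within_contW/cst_continuous.
  exact: (within_contM cj cj).
have dV : forall t : R, 0 < t -> is_derive t 1 V (Dv t).
  move=> t t0.
  apply: is_derive_sumf => j.
  exact: (is_derive_sq (is_deriveB (dd j t t0).1 (is_derive_mulc (N%:R^-1) (is_derive_sumf (fun k => (dd k t t0).1))))).
have C0' : C != 0 by rewrite gt_eqF.
pose kap := beta / (2 * C).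
have kap0 : 0 < kap by rewrite divr_gt0 // mulr_gt0.
have bnd : forall t : R, 0 < t -> derive1 V t <= - kap * V t + Q / kap.
  move=> t t0.
  rewrite derive1E (@derive_val _ _ _ _ _ _ _ (dV t t0)).
  pose x := fun k => zh k t.
  pose S := \sum_(i < N) \sum_(j < N) a i j * (x i - x j) ^+ 2.
  have s0 := sum_dev0 x.
  have E0 : Dv t = \sum_(j < N) 2 * (x j - avg x) * derive1 (zh j) t
       - 2 * ((\sum_(k < N) derive1 (zh k) t) / N%:R) * \sum_(j < N) (x j - avg x).
    by rewrite /Dv mulr_sumr -sumrB; apply: eq_bigr => j _; rewrite /x /avg; ring.
  have E1 : \sum_(j < N) 2 * (x j - avg x) * derive1 (zh j) t =
      \sum_(j < N) 2 * (x j - avg x) * u j t - beta * (2 * \sum_(j < N) (x j - avg x) * L j t).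
    rewrite mulr_sumr mulr_sumr -sumrB; apply: eq_bigr => j _.
    rewrite (dd j t t0).2; ring.
  have E2 : 2 * \sum_(j < N) (x j - avg x) * L j t = S.
    exact: (lap_identity x (avg x) sym).
  rewrite E0 s0 mulr0 subr0 E1 E2.
  have Y : \sum_(j < N) 2 * (x j - avg x) * u j t <=
      kap * V t + (\sum_(j < N) u j t ^+ 2) / kap.
    apply: (@le_trans _ _ (\sum_(j < N) (kap * (x j - avg x) ^+ 2 + u j t ^+ 2 / kap))).
      by apply: ler_sum => j _; exact: young.
    by rewrite big_split /= -mulr_sumr -mulr_suml.
  have U : (\sum_(j < N) u j t ^+ 2) / kap <= Q / kap.
    rewrite ler_pM2r ?invr_gt0 //; apply: ler_sum => j _.
    exact: sq_le_of_abs (ub j t t0).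
  have HV : V t <= C * S := HC x.
  have H3 : (beta / C) * V t <= beta * S.
    have := HV; rewrite -(ler_pM2l (divr_gt0 b0 C0)) => h.
    by apply: (le_trans h); rewrite mulrA divfK.
  have H4 : (beta / C) * V t = 2 * (kap * V t) by rewrite /kap; field.
  lra.
have dV' : forall t : R, 0 < t -> derivable V t 1 by move=> t t0; have [] := dV t t0.
have cmp := comparison kap0 cV dV' bnd.
set y := 2 * C * Num.sqrt Q / beta.
have y0 : 0 <= y.
  apply: divr_ge0; last exact: ltW.
  by apply: mulr_ge0; [apply: mulr_ge0 => //; exact: ltW | exact: sqrtr_ge0].
have yb : Q / kap / kap = y ^+ 2.
  rewrite /y /kap expr_div_n !exprMn sqr_sqrtr //; field.
  by rewrite gt_eqF.
apply: limsup_from_bound => e e0.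
have [T [T0 HT]] := exp_bound_eventually (V 0 - Q / kap / kap) kap0 (mulr_gt0 e0 e0).
exists T => t Tt.
have t0 : 0 < t by exact: le_lt_trans Tt.
rewrite -(cons t (ltW t0)).
pose x := fun k => zh k t.
have hi : (x i - avg x) ^+ 2 <= V t.
  by apply: (@term_le_sum _ N (fun j => (x j - avg x) ^+ 2)) => j; exact: sqr_ge0.
have hV := cmp t (ltW t0).
have hT := HT t Tt.
apply: abs_le_of_sq; first by apply: addr_ge0 => //; exact: ltW.
have : (x i - avg x) ^+ 2 <= y ^+ 2 + e * e.
  rewrite -yb; apply: (le_trans hi); apply: (le_trans hV); lra.
move=> h; apply: (le_trans h).
rewrite sqrrD; have : 0 <= 2 * y * e by apply: mulr_ge0; [apply: mulr_ge0 | exact: ltW].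
rewrite expr2 [e ^+ 2]expr2. 
lra.
Qed.
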